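(* Let $m\geq 3$ be odd, $n=3m$, and let $\mathcal{L}_n$ be the latin square defined below. Every transversal of $\mathcal{L}_n$ contains at least one entry from each of the nine blocks $A_{11},A_{12},A_{13},A_{21},A_{22},A_{23},A_{31},A_{32},A_{33}$.
   Context: A latin square of order $n$ is viewed as its set of entries $(r,c,s)$ (symbol $s$ in row $r$, column $c$); a transversal is a set of $n$ entries containing each row, column and symbol exactly once. Let $m\ge3$ be odd and $n=3m$. The latin square $\mathcal{L}_n$ has rows, columns and symbols in $\{0,1,\dots,n-1\}$ and is partitioned into nine $m\times m$ blocks $A_{ij}$, $i,j\in\{1,2,3\}$: for $a,b\in\{0,\dots,m-1\}$, the cell in row $(i-1)m+a$ and column $(j-1)m+b$ contains $A_{ij}[a,b]$. Writing $t$ for the residue of $a+b$ modulo $m$ in $\{0,\dots,m-1\}$, $A_{ij}[a,b]=t$ if $t\neq 0$ and $i+j\equiv 2\pmod 3$; $A_{ij}[a,b]=t+m$ if $t\neq m-1$ and $i+j\equiv 0\pmod 3$; $A_{ij}[a,b]=t+2m$ if $t\neq m-1$ and $i+j\equiv1\pmod3$; $A_{ij}[a,b]=0$ if $t=0$ and $(i,j)=(1,1)$; $A_{ij}[a,b]=2m-1$ if $t=0$ and $(i,j)=(2,3)$; $A_{ij}[a,b]=3m-1$ if $t=0$ and $(i,j)=(3,2)$; $A_{ij}[a,b]=0$ if $t=m-1$ and $(i,j)\in\{(2,2),(3,3)\}$; $A_{ij}[a,b]=2m-1$ if $t=m-1$ and $(i,j)\in\{(1,2),(3,1)\}$; $A_{ij}[a,b]=3m-1$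 if $t=m-1$ and $(i,j)\in\{(1,3),(2,1)\}$. An entry of $\mathcal{L}_n$ is said to be in block $A_{ij}$ if its cell lies in that block. *)

(* Defs.v *)
From mathcomp Require Import all_boot.
Set Implicit Arguments. Unset Strict Implicit. Unset Printing Implicit Defensive.

Definition blockA (m i j a b : nat) : nat :=
  let t := (a + b) %% m in
  let k := (i + j) %% 3 in
  if (t != 0) && (k == 2) then t
  else if (t != m.-1) && (k == 0) then t + m
  else if (t != m.-1) && (k == 1) then t + 2 * m
  else if t == 0 then
    (if (i == 1) && (j == 1) then 0
     else if (i == 2) && (j == 3) then 2 * m - 1
     else 3 * m - 1)       (* (i,j) = (3,2) *)
  else (* t = m-1 *)
    (if ((i == 2) && (j == 2)) || ((i == 3) && (j == 3)) then 0
     else if ((i == 1) && (j == 2)) || ((i == 3) && (j == 1)) then 2 * m - 1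
     else 3 * m - 1).      (* (i,j) in {(1,3),(2,1)} *)

Definition blk (m r : nat) : nat := r %/ m + 1.

Definition Lsym (m r c : nat) : nat := blockA m (blk m r) (blk m c) (r %% m) (c %% m).

Definition entry (n : nat) := ('I_n * 'I_n * 'I_n)%type.

Definition Lsq (m : nat) : {set entry (3 * m)} :=
  [set e : entry (3 * m) | nat_of_ord e.2 == Lsym m e.1.1 e.1.2].

Definition is_latin_transversal (n : nat) (S T : {set entry n}) : Prop :=
  [/\ T \subset S, #|T| = n,
      forall r : 'I_n, #|[set e in T | e.1.1 == r]| = 1,
      forall c : 'I_n, #|[set e in T | e.1.2 == c]| = 1 &
      forall s : 'I_n, #|[set e in T | e.2 == s]| = 1].

Definition in_block (m i j : nat) (e : entry (3 * m)) : bool :=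
  (blk m e.1.1 == i) && (blk m e.1.2 == j).
Arguments is_latin_transversal n S T : clear implicits.
Arguments in_block m i j e : clear implicits.

(* Main.v *)
Require Import Defs.
From mathcomp Require Import all_boot.
From mathcomp Require Import zify.

Lemma sum_key n (T : {set entry n}) (key : entry n -> 'I_n) (f : nat -> nat) :
  (forall r, #|[set e in T | key e == r]| = 1) ->
  \sum_(e in T) f (key e) = \sum_(r < n) f r.
Proof.
move=> H.
rewrite (partition_big key xpredT) //=.
apply: eq_bigr => r _.
transitivity (\sum_(i in T | key i == r) f r).
  by apply: eq_bigr => e /andP[_ /eqP ->].
have -> : \sum_(i in T | key i == r) f r = \sum_(i in [set e in T | key e == r]) f r.
  by apply: eq_bigl => e; rewrite inE.
by rewrite sum_nat_const H mul1n.
Qed.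

Lemma range3 m (G : nat -> nat) :
  \sum_(r < 3*m) G r = \sum_(a < m) (G a + G (m + a) + G (2*m + a)).
Proof.
rewrite -(big_mkord xpredT G) (big_cat_nat (n:=m)) //=; last by lia.
rewrite (big_cat_nat (n:=2*m) (m:=m)) /=; [|lia|lia].
rewrite -{2}[m]add0n big_addn -{2}[2*m]add0n big_addn.
have -> : 2 * m - m = m by lia.
have -> : 3 * m - 2 * m = m by lia.
rewrite -!big_split /= big_mkord.
by apply: eq_bigr => a _; rewrite addnA [a + m]addnC [a + 2*m]addnC.
Qed.

Lemma count_eq (n v : nat) : \sum_(s < n) ((s : nat) == v : nat) = (v < n).
Proof.
elim: n => [|n IH]; first by rewrite big_ord0.
rewrite big_ord_recr /= IH; lia.
Qed.

Lemma count_pos m : \sum_(a < m) (0 < a : nat) = m.-1.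
Proof.
elim: m => [|n IH]; first by rewrite big_ord0.
rewrite big_ord_recr /= IH; lia.
Qed.

Lemma count_lt m k : \sum_(a < m) (a < k : nat) = minn m k.
Proof.
elim: m => [|n IH]; first by rewrite big_ord0 min0n.
rewrite big_ord_recr /= IH; lia.
Qed.

Lemma sum_const1 m : \sum_(a < m) 1 = m.
Proof. by rewrite sum_nat_const card_ord muln1. Qed.

Lemma tri_mod m : odd m -> 'C(m, 2) %% m = 0.
Proof.
move=> om.
have [k ->] : exists k, m = k.*2.+1 by exists m./2; rewrite -{1}(odd_double_half m) om.
rewrite bin2 /= -mul2n mulnCA mul2n doubleK. exact: modnMr.
Qed.

Lemma divmod_lo m k a : a < m -> (k * m + a) %/ m = k /\ (k * m + a) %% m = a.
Proof.
move=> am; have m0 : 0 < m by lia.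
by rewrite divnMDl // modnMDl divn_small // modn_small // addn0.
Qed.

Definition res (m s : nat) := if s < m then s else if s < 2*m then s - m else s - 2*m.
Definition reg2 m s := (0 < s) && (s < m).
Definition reg0 m s := (m <= s) && (s < 2*m-1).
Definition reg1 m s := (2*m <= s) && (s < 3*m-1).

Definition facts m (s : nat) (B : nat -> nat -> bool) (t : nat) : Prop :=
  (reg2 m s + ((s == 0) && B 1 1) + ((s == 2*m-1) && B 2 3) + ((s == 3*m-1) && B 3 2)
        = B 1 1 + B 2 3 + B 3 2) /\ (
      reg0 m s + ((s == 0) && B 3 3) + ((s == 2*m-1) && B 1 2) + ((s == 3*m-1) && B 2 1)
        = B 3 3 + B 1 2 + B 2 1) /\ (
      reg1 m s + ((s == 0) && B 2 2) + ((s == 2*m-1) && B 3 1) + ((s == 3*m-1) && B 1 3)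
        = B 2 2 + B 3 1 + B 1 3) /\ (
      (s == 0 : nat) = ((s == 0) && B 1 1) + ((s == 0) && B 2 2) + ((s == 0) && B 3 3)) /\ (
      (s == 2*m-1 : nat) = ((s == 2*m-1) && B 2 3) + ((s == 2*m-1) && B 1 2) + ((s == 2*m-1) && B 3 1)) /\ (
      (s == 3*m-1 : nat) = ((s == 3*m-1) && B 3 2) + ((s == 3*m-1) && B 1 3) + ((s == 3*m-1) && B 2 1)) /\ (
      t + (m-1) * (((s == 2*m-1) && B 2 3) + ((s == 3*m-1) && B 3 2))
        = res m s + (m-1) * (((s == 0) && B 2 2) + ((s == 0) && B 3 3))).

Lemma pointwise (m i j a b : nat) : 3 <= m -> 1 <= i <= 3 -> 1 <= j <= 3 -> a < m -> b < m ->
  facts m (blockA m i j a b) (fun i' j' => (i == i') && (j == j')) ((a + b) %% m).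
Proof.
move=> m3 hi hj am bm; rewrite /facts.
have m0 : 0 < m by lia.
have := ltn_pmod (a + b) m0.
rewrite /blockA /res /reg2 /reg0 /reg1.
move: ((a + b) %% m) => t tm.
have : i = 1 \/ i = 2 \/ i = 3 by lia.
have : j = 1 \/ j = 2 \/ j = 3 by lia.
move=> [->|[->|->]] [->|[->|->]]; rewrite /=;
repeat case: ifP; move=> *; (repeat split); first [lia | nia].
Qed.

Lemma pointwise_e m (e : entry (3*m)) : 3 <= m -> e \in Lsq m ->
  facts m e.2 (fun i j => in_block m i j e) ((e.1.1 %% m + e.1.2 %% m) %% m).
Proof.
move=> m3; rewrite inE => /eqP ->; rewrite /Lsym /blk.
have m0 : 0 < m by lia.
have h1 := ltn_ord e.1.1; have h2 := ltn_ord e.1.2.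
have d1 : e.1.1 %/ m < 3 by rewrite ltn_divLR // mulnC.
have d2 : e.1.2 %/ m < 3 by rewrite ltn_divLR // mulnC.
apply: pointwise => //; try lia; by rewrite addn1 /= ?d1 ?d2.
Qed.

Definition X m i j (e : entry (3*m)) : nat := in_block m i j e.
Definition Yv m v i j (e : entry (3*m)) : nat := (nat_of_ord e.2 == v) && in_block m i j e.

Lemma row_split m (e : entry (3*m)) i0 : 0 < m ->
  (blk m e.1.1 == i0 : nat) = X m i0 1 e + X m i0 2 e + X m i0 3 e.
Proof.
move=> m0; rewrite /X /in_block /blk.
have h2 := ltn_ord e.1.2.
have d2 : e.1.2 %/ m < 3 by rewrite ltn_divLR // mulnC.
move: d2; move: (e.1.2 %/ m) (e.1.1 %/ m) => q p; lia.
Qed.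

Lemma col_split m (e : entry (3*m)) j0 : 0 < m ->
  (blk m e.1.2 == j0 : nat) = X m 1 j0 e + X m 2 j0 e + X m 3 j0 e.
Proof.
move=> m0; rewrite /X /in_block /blk.
have h2 := ltn_ord e.1.1.
have d2 : e.1.1 %/ m < 3 by rewrite ltn_divLR // mulnC.
move: d2; move: (e.1.2 %/ m) (e.1.1 %/ m) => q p; lia.
Qed.

Lemma blk_count m i0 : 0 < m -> 1 <= i0 <= 3 ->
  \sum_(r < 3*m) (blk m r == i0 : nat) = m.
Proof.
move=> m0 hi; rewrite (range3 m (fun r => (blk m r == i0 : nat))) -[RHS]sum_const1; apply: eq_bigr => a _.
have am := ltn_ord a.
have [q0 _] := divmod_lo m 0 a am; have [q1 _] := divmod_lo m 1 a am; have [q2 _] := divmod_lo m 2 a am.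
rewrite mul0n add0n in q0; rewrite mul1n in q1.
rewrite /blk q0 q1 q2; lia.
Qed.

Lemma res_count m : 0 < m ->
  \sum_(r < 3*m) res m r = 3 * \sum_(a < m) (a : nat).
Proof.
move=> m0; rewrite (range3 m (res m)) big_distrr /=; apply: eq_bigr => a _.
have am := ltn_ord a; rewrite /res; (repeat case: ifP); move=> *; lia.
Qed.

Lemma mod_count m : 0 < m ->
  \sum_(r < 3*m) (r %% m) = 3 * \sum_(a < m) (a : nat).
Proof.
move=> m0; rewrite (range3 m (modn^~ m)) big_distrr /=; apply: eq_bigr => a _.
have am := ltn_ord a.
have [_ q0] := divmod_lo m 0 a am; have [_ q1] := divmod_lo m 1 a am; have [_ q2] := divmod_lo m 2 a am.
rewrite mul0n add0n in q0; rewrite mul1n in q1.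
rewrite q0 q1 q2; lia.
Qed.

Lemma Q_mod m : odd m -> (\sum_(a < m) (a : nat)) %% m = 0.
Proof. by move=> om; rewrite -(big_mkord xpredT (fun a => a)) bin2_sum tri_mod. Qed.

Lemma w_lemma m w0 w1 : 3 <= m -> w0 <= 1 -> w1 <= 2 ->
  ((m-1) * w1) %% m = ((m-1) * w0) %% m -> w0 = w1.
Proof.
move=> m3 h0 h1.
have e0 : ((m-1) * 0) %% m = 0 by rewrite muln0 mod0n.
have e1 : ((m-1) * 1) %% m = m - 1 by rewrite muln1 modn_small //; lia.
have e2 : ((m-1) * 2) %% m = m - 2.
  by rewrite (_ : (m-1) * 2 = 1 * m + (m-2)); [rewrite modnMDl modn_small //; lia | lia].
case: w0 h0 => [|[|//]] _; case: w1 h1 => [|[|[|//]]] _ //; rewrite ?e0 ?e1 ?e2; lia.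
Qed.

Lemma reg_counts m : 3 <= m ->
  [/\ \sum_(r < 3*m) reg2 m r = m.-1, \sum_(r < 3*m) reg0 m r = m.-1
    & \sum_(r < 3*m) reg1 m r = m.-1].
Proof.
move=> m3; split.
- rewrite (range3 m (fun r => reg2 m r : nat)) -count_pos; apply: eq_bigr => a _.
  have am := ltn_ord a; rewrite /reg2; lia.
- rewrite (range3 m (fun r => reg0 m r : nat)).
  rewrite (_ : m.-1 = minn m (m-1)); last by lia.
  rewrite -count_lt; apply: eq_bigr => a _.
  have am := ltn_ord a; rewrite /reg0; lia.
- rewrite (range3 m (fun r => reg1 m r : nat)).
  rewrite (_ : m.-1 = minn m (m-1)); last by lia.
  rewrite -count_lt; apply: eq_bigr => a _.
  have am := ltn_ord a; rewrite /reg1; lia.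
Qed.

Ltac abstr T m :=
  set x11 := \sum_(e in T) X m 1 1 e;
  set x12 := \sum_(e in T) X m 1 2 e;
  set x13 := \sum_(e in T) X m 1 3 e;
  set x21 := \sum_(e in T) X m 2 1 e;
  set x22 := \sum_(e in T) X m 2 2 e;
  set x23 := \sum_(e in T) X m 2 3 e;
  set x31 := \sum_(e in T) X m 3 1 e;
  set x32 := \sum_(e in T) X m 3 2 e;
  set x33 := \sum_(e in T) X m 3 3 e;
  set ya11 := \sum_(e in T) Yv m 0 1 1 e;
  set ya22 := \sum_(e in T) Yv m 0 2 2 e;
  set ya33 := \sum_(e in T) Yv m 0 3 3 e;
  set za := \sum_(e in T) (nat_of_ord e.2 == 0 : nat);
  set yb23 := \sum_(e in T) Yv m (2*m-1) 2 3 e;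
  set yb12 := \sum_(e in T) Yv m (2*m-1) 1 2 e;
  set yb31 := \sum_(e in T) Yv m (2*m-1) 3 1 e;
  set zb := \sum_(e in T) (nat_of_ord e.2 == (2*m-1) : nat);
  set yc32 := \sum_(e in T) Yv m (3*m-1) 3 2 e;
  set yc13 := \sum_(e in T) Yv m (3*m-1) 1 3 e;
  set yc21 := \sum_(e in T) Yv m (3*m-1) 2 1 e;
  set zc := \sum_(e in T) (nat_of_ord e.2 == (3*m-1) : nat);
  set sreg2 := \sum_(e in T) reg2 m e.2;
  set sreg0 := \sum_(e in T) reg0 m e.2;
  set sreg1 := \sum_(e in T) reg1 m e.2.

Theorem theorem15 (m : nat) (T : {set entry (3 * m)}) :
  3 <= m -> odd m ->
  is_latin_transversal (3 * m) (Lsq m) T ->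
  forall i j : nat, 1 <= i <= 3 -> 1 <= j <= 3 ->
  exists e : entry (3 * m), (e \in T) && in_block m i j e.
Proof.
move=> m3 om [Tsub cardT Hr Hc Hs] i j hi hj.
have m0 : 0 < m by lia.
have P e : e \in T -> facts m e.2 (fun i j => in_block m i j e) ((e.1.1 %% m + e.1.2 %% m) %% m).
  by move=> eT; apply: pointwise_e => //; apply: (subsetP Tsub).
have [R2 R0 R1] := reg_counts m m3.
have V2 : \sum_(e in T) reg2 m e.2 = m.-1.
  by apply: etrans; [exact: (@sum_key _ T (fun e => e.2) (fun s => reg2 m s : nat) Hs) | exact: R2].
have V0 : \sum_(e in T) reg0 m e.2 = m.-1.
  by apply: etrans; [exact: (@sum_key _ T (fun e => e.2) (fun s => reg0 m s : nat) Hs) | exact: R0].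
have V1 : \sum_(e in T) reg1 m e.2 = m.-1.
  by apply: etrans; [exact: (@sum_key _ T (fun e => e.2) (fun s => reg1 m s : nat) Hs) | exact: R1].
have Zc v : v < 3 * m -> \sum_(e in T) (nat_of_ord e.2 == v : nat) = 1.
  move=> vm; apply: etrans; first exact: (@sum_key _ T (fun e => e.2) (fun s => (s == v) : nat) Hs).
  by rewrite count_eq vm.
have Z0 := Zc 0 ltac:(lia).
have Z1 := Zc (2*m-1) ltac:(lia).
have Z2 := Zc (3*m-1) ltac:(lia).
have Ro i0 : 1 <= i0 <= 3 -> \sum_(e in T) X m i0 1 e + \sum_(e in T) X m i0 2 e + \sum_(e in T) X m i0 3 e = m.
  move=> hi0; rewrite -!big_split /=.
  apply: (etrans _ (blk_count m i0 m0 hi0)); apply: etrans; last exact: (@sum_key _ T (fun e => e.1.1) (fun r => (blk m r == i0) : nat) Hr).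
  by apply: eq_bigr => e _; rewrite (row_split _ _ _ m0).
have Co j0 : 1 <= j0 <= 3 -> \sum_(e in T) X m 1 j0 e + \sum_(e in T) X m 2 j0 e + \sum_(e in T) X m 3 j0 e = m.
  move=> hj0; rewrite -!big_split /=.
  apply: (etrans _ (blk_count m j0 m0 hj0)); apply: etrans; last exact: (@sum_key _ T (fun e => e.1.2) (fun r => (blk m r == j0) : nat) Hc).
  by apply: eq_bigr => e _; rewrite (col_split _ _ _ m0).
have R_1 := Ro 1 isT; have R_2 := Ro 2 isT; have R_3 := Ro 3 isT.
have C_1 := Co 1 isT; have C_2 := Co 2 isT; have C_3 := Co 3 isT.
have YX v i0 j0 : \sum_(e in T) Yv m v i0 j0 e <= \sum_(e in T) X m i0 j0 e.
  by apply: leq_sum => e _; rewrite /Yv /X; case: (_ == _).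
have C2 : \sum_(e in T) reg2 m e.2 + \sum_(e in T) Yv m 0 1 1 e + \sum_(e in T) Yv m (2*m-1) 2 3 e
   + \sum_(e in T) Yv m (3*m-1) 3 2 e = \sum_(e in T) X m 1 1 e + \sum_(e in T) X m 2 3 e + \sum_(e in T) X m 3 2 e.
  rewrite -!big_split; apply: eq_bigr => e eT.
  by have [f _] := P e eT; exact: f.
have C0 : \sum_(e in T) reg0 m e.2 + \sum_(e in T) Yv m 0 3 3 e + \sum_(e in T) Yv m (2*m-1) 1 2 e
   + \sum_(e in T) Yv m (3*m-1) 2 1 e = \sum_(e in T) X m 3 3 e + \sum_(e in T) X m 1 2 e + \sum_(e in T) X m 2 1 e.
  rewrite -!big_split; apply: eq_bigr => e eT.
  by have [_ [f _]] := P e eT; exact: f.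
have C1 : \sum_(e in T) reg1 m e.2 + \sum_(e in T) Yv m 0 2 2 e + \sum_(e in T) Yv m (2*m-1) 3 1 e
   + \sum_(e in T) Yv m (3*m-1) 1 3 e = \sum_(e in T) X m 2 2 e + \sum_(e in T) X m 3 1 e + \sum_(e in T) X m 1 3 e.
  rewrite -!big_split; apply: eq_bigr => e eT.
  by have [_ [_ [f _]]] := P e eT; exact: f.
have S0 : \sum_(e in T) (nat_of_ord e.2 == 0 : nat) = \sum_(e in T) Yv m 0 1 1 e + \sum_(e in T) Yv m 0 2 2 e
   + \sum_(e in T) Yv m 0 3 3 e.
  rewrite -!big_split; apply: eq_bigr => e eT.
  by have [_ [_ [_ [f _]]]] := P e eT; exact: f.
have S1 : \sum_(e in T) (nat_of_ord e.2 == 2*m-1 : nat) = \sum_(e in T) Yv m (2*m-1) 2 3 e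
   + \sum_(e in T) Yv m (2*m-1) 1 2 e + \sum_(e in T) Yv m (2*m-1) 3 1 e.
  rewrite -!big_split; apply: eq_bigr => e eT.
  by have [_ [_ [_ [_ [f _]]]]] := P e eT; exact: f.
have S2 : \sum_(e in T) (nat_of_ord e.2 == 3*m-1 : nat) = \sum_(e in T) Yv m (3*m-1) 3 2 e
   + \sum_(e in T) Yv m (3*m-1) 1 3 e + \sum_(e in T) Yv m (3*m-1) 2 1 e.
  rewrite -!big_split; apply: eq_bigr => e eT.
  by have [_ [_ [_ [_ [_ [f _]]]]]] := P e eT; exact: f.
have Mo : \sum_(e in T) ((e.1.1 %% m + e.1.2 %% m) %% m)
    + (m-1) * (\sum_(e in T) Yv m (2*m-1) 2 3 e + \sum_(e in T) Yv m (3*m-1) 3 2 e)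
  = \sum_(e in T) res m e.2 + (m-1) * (\sum_(e in T) Yv m 0 2 2 e + \sum_(e in T) Yv m 0 3 3 e).
  rewrite -!big_split !big_distrr -!big_split; apply: eq_bigr => e eT.
  have [_ [_ [_ [_ [_ [_ f]]]]]] := P e eT.
  exact: f.
have [q Hq] : exists q, \sum_(a < m) (a : nat) = q * m.
  exists ((\sum_(a < m) (a : nat)) %/ m).
  by rewrite {1}(divn_eq (\sum_(a < m) (a : nat)) m) Q_mod // addn0.
have Vres : \sum_(e in T) res m e.2 = 3 * (q * m).
  apply: etrans; first exact: (@sum_key _ T (fun e => e.2) (res m) Hs).
  by rewrite res_count // Hq.
have A1 : \sum_(e in T) (e.1.1 %% m) = \sum_(r < 3*m) (r %% m) :=
  @sum_key _ T (fun e => e.1.1) (modn^~ m) Hr.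
have A2 : \sum_(e in T) (e.1.2 %% m) = \sum_(r < 3*m) (r %% m) :=
  @sum_key _ T (fun e => e.1.2) (modn^~ m) Hc.
have Vt : \sum_(e in T) (e.1.1 %% m + e.1.2 %% m) = 6 * q * m.
  rewrite big_split /= A1 A2 mod_count // Hq; lia.
have Tm : (\sum_(e in T) ((e.1.1 %% m + e.1.2 %% m) %% m)) %% m = 0.
  by rewrite modn_summ Vt -[6 * q * m]addn0 modnMDl mod0n.
have [p Hp] : exists p, \sum_(e in T) ((e.1.1 %% m + e.1.2 %% m) %% m) = p * m.
  exists ((\sum_(e in T) ((e.1.1 %% m + e.1.2 %% m) %% m)) %/ m).
  by rewrite {1}(divn_eq (\sum_(e in T) ((e.1.1 %% m + e.1.2 %% m) %% m)) m) Tm addn0.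
rewrite Hp Vres mulnA in Mo.
have W := congr1 (modn^~ m) Mo; rewrite /= !modnMDl in W.
have Y1 := YX 0 1 1; have Y2 := YX 0 2 2; have Y3 := YX 0 3 3.
have Y4 := YX (2*m-1) 2 3; have Y5 := YX (2*m-1) 1 2; have Y6 := YX (2*m-1) 3 1.
have Y7 := YX (3*m-1) 3 2; have Y8 := YX (3*m-1) 1 3; have Y9 := YX (3*m-1) 2 1.
have Weq : \sum_(e in T) Yv m 0 2 2 e + \sum_(e in T) Yv m 0 3 3 e =
   \sum_(e in T) Yv m (2*m-1) 2 3 e + \sum_(e in T) Yv m (3*m-1) 3 2 e.
  by apply: (w_lemma _ _ _ m3 _ _ W); abstr T m; lia.
case: (boolP [exists e, (e \in T) && in_block m i j e]) => [/existsP //|ne].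
have X0 : \sum_(e in T) X m i j e = 0.
  apply: big1 => e eT; rewrite /X; case E: (in_block m i j e) => //.
  by move/negP: ne; case; apply/existsP; exists e; rewrite eT E.
exfalso; clear -X0 Weq R_1 R_2 R_3 C_1 C_2 C_3 C0 C1 C2 S0 S1 S2 Z0 Z1 Z2 V0 V1 V2
  Y1 Y2 Y3 Y4 Y5 Y6 Y7 Y8 Y9 hi hj m3.
have : i = 1 \/ i = 2 \/ i = 3 by lia.
have : j = 1 \/ j = 2 \/ j = 3 by lia.
move=> [?|[?|?]] [?|[?|?]]; subst; abstr T m; lia.
Qed.
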